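(* In the reinforcement-learning network model described in the context, for every $\varepsilon>0$ there is a constant $C>0$ depending only on $(a_{kl})_{k,l\in\mathbb{V}}$ and $\varepsilon$ such that, for all $i,j\in\mathbb{V}$ with $i\sim j$ and all $n$ with $T_n\ge C$: if $x_n\in U_{ij}(\varepsilon)$ and $|H(x_{n+1})-H(x_n)|<\varepsilon/2$, then $x_{n+1}\in U_{ij}(2\varepsilon)$.
   Context: Let $G=(\mathbb{V},E)$ be a finite graph with adjacency $\sim$. Let $a_{ij}=a_{ji}\ge0$, $>0$ only if $i\sim j$. Let $(p_W)_{W\subseteq\mathbb{V}}$ be nonnegative with $\sum_Wp_W=1$; for $i\sim j$, $p_{ij}=\sum_{W:i,j\in W}p_W$; $p_{ij}=0$ if $i\not\sim j$. Assume some $a_{ij}p_{ij}>0$. Let $v^0_{ij}=v^0_{ji}\ge0$, $>0$ iff $i\sim j$. Process: $V^0_{ij}=v^0_{ij}$, $V^n_{ij}=0$ if $i\not\sim j$, $V^n_i=\sum_jV^n_{ij}$; at each time $n$ each vertex $i$ independently chooses a neighbour $j$ with probability $V^n_{ij}/V^n_i$; independently Nature picks $W_n$ with $\mathbb{P}(W_n=W)=p_W$, i.i.d.; if $i,j\in W_n$, $i\sim j$ and $i,j$ choose each other, then $V^{n+1}_{ij}=V^{n+1}_{ji}=V^n_{ij}+a_{ij}$, else unchanged. Let $T_n=\sum_{i,j}V^n_{ij}$ (ordered pairs), $x^n_{ij}=V^n_{ij}/T_n$, $x_n=(x^n_{ij})$. Let $h_1=\sum_{(i,j):a_{ij}p_{ij}>0}v^0_{ij}/\sum_{k,l}v^0_{kl}$;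 $\Delta$ is the set of arrays $x$ with $x_{ij}=x_{ji}\ge0$, $x_{ij}=0$ if $i\not\sim j$, $\sum_{i,j}x_{ij}=1$, $\sum_{(i,j):a_{ij}p_{ij}>0}x_{ij}\ge h_1$; $x_i=\sum_jx_{ij}$. $H(x)=\sum_{(i,j):x_{ij}>0}a_{ij}p_{ij}x_{ij}^2/(x_ix_j)$; for $x_{ij}>0$, $y_{ij}=a_{ij}p_{ij}x_{ij}/(x_ix_j)$. For $\varepsilon>0$, $U_{ij}(\varepsilon)=\{x\in\Delta:\ x_{ij}<\varepsilon\ \text{or}\ y_{ij}-H(x)\ge-\varepsilon\}$. *)

(* Defs.v *)
From mathcomp Require Import all_boot all_order all_algebra.
Set Implicit Arguments. Unset Strict Implicit. Unset Printing Implicit Defensive.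
Import Order.TTheory GRing.Theory Num.Theory.
Local Open Scope ring_scope.

Section Defs.
Variables (R : realFieldType) (T : finType).

Definition pedge (adj : rel T) (p : {ffun {set T} -> R}) (i j : T) : R :=
  if adj i j then \sum_(W : {set T} | (i \in W) && (j \in W)) p W else 0.

Definition total_mass (V : T -> T -> R) : R := \sum_(i : T) \sum_(j : T) V i j.

Definition normalize (V : T -> T -> R) : T -> T -> R :=
  fun i j => V i j / total_mass V.

Definition rowsum (x : T -> T -> R) (i : T) : R := \sum_(j : T) x i j.

Definition Hfun (adj : rel T) (a : T -> T -> R) (p : {ffun {set T} -> R})
  (x : T -> T -> R) : R :=
  \sum_(i : T) \sum_(j : T)
     (if 0 < x i j then
        a i j * pedge adj p i j * x i j ^+ 2 / (rowsum x i * rowsum x j)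
      else 0).

Definition yfun (adj : rel T) (a : T -> T -> R) (p : {ffun {set T} -> R})
  (x : T -> T -> R) (i j : T) : R :=
  a i j * pedge adj p i j * x i j / (rowsum x i * rowsum x j).

Definition active_mass (adj : rel T) (a : T -> T -> R) (p : {ffun {set T} -> R})
  (x : T -> T -> R) : R :=
  \sum_(i : T) \sum_(j : T) (if 0 < a i j * pedge adj p i j then x i j else 0).

Definition h1 (adj : rel T) (a : T -> T -> R) (p : {ffun {set T} -> R})
  (v0 : T -> T -> R) : R := active_mass adj a p v0 / total_mass v0.

Definition inDelta (adj : rel T) (a : T -> T -> R) (p : {ffun {set T} -> R})
  (v0 : T -> T -> R) (x : T -> T -> R) : Prop :=
  [/\ (forall i j, x i j = x j i),
      (forall i j, 0 <= x i j),
      (forall i j, ~~ adj i j -> x i j = 0),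
      total_mass x = 1 &
      h1 adj a p v0 <= active_mass adj a p x].

Definition Uset (adj : rel T) (a : T -> T -> R) (p : {ffun {set T} -> R})
  (v0 : T -> T -> R) (i j : T) (eps : R) (x : T -> T -> R) : Prop :=
  inDelta adj a p v0 x /\
  (x i j < eps \/ - eps <= yfun adj a p x i j - Hfun adj a p x).

(* One possible (positive-probability) step of the process: Nature picks W
   with p_W > 0, each vertex i chooses a neighbour c i (when it has one);
   edges {k,l} inside W whose endpoints chose each other get reinforced. *)
Definition step (adj : rel T) (a : T -> T -> R) (p : {ffun {set T} -> R})
  (V V' : T -> T -> R) : Prop :=
  exists W : {set T}, 0 < p W /\
  exists c : T -> T,
    (forall i, (exists j, adj i j) -> adj i (c i)) /\
    (forall k l, V' k l = V k l +
       (if [&& adj k l, k \in W, l \in W, c k == l & c l == k]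
        then a k l else 0)).

Definition is_path (adj : rel T) (a : T -> T -> R) (p : {ffun {set T} -> R})
  (v0 : T -> T -> R) (V : nat -> T -> T -> R) : Prop :=
  (forall k l, V 0%N k l = v0 k l) /\
  (forall n, step adj a p (V n) (V n.+1)).

End Defs.

(* Main.v *)
Require Import Defs.
From mathcomp Require Import all_boot all_order all_algebra.
From mathcomp Require Import ring lra.
Import Order.TTheory GRing.Theory Num.Theory.
Local Open Scope ring_scope.

Section Aux.
Context {R : realFieldType} {T : finType}.
Implicit Types (V D : T -> T -> R) (p : {ffun {set T} -> R}) (adj : rel T) (a : T -> T -> R).

Lemma sum2_div V t : \sum_(i : T) \sum_(j : T) (V i j / t) = (\sum_(i : T) \sum_(j : T) V i j) / t.
Proof. by rewrite mulr_suml; apply: eq_bigr => i _; rewrite mulr_suml. Qed.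

Lemma total_mass_norm V : total_mass (normalize V) = total_mass V / total_mass V.
Proof. by rewrite {1}/total_mass /normalize sum2_div. Qed.

Lemma rowsum_div V t i : rowsum (fun k l => V k l / t) i = rowsum V i / t.
Proof. by rewrite /rowsum mulr_suml. Qed.

Lemma active_norm adj a p V :
  active_mass adj a p (normalize V) = active_mass adj a p V / total_mass V.
Proof.
rewrite /active_mass /normalize -sum2_div; apply: eq_bigr => i _; apply: eq_bigr => j _.
by case: ifP; rewrite ?mul0r.
Qed.

Lemma yfun_norm adj a p V i j :
  total_mass V != 0 -> rowsum V i != 0 -> rowsum V j != 0 ->
  yfun adj a p (normalize V) i j =
  a i j * pedge adj p i j * V i j * total_mass V / (rowsum V i * rowsum V j).
Proof.
move=> t0 ri rj; rewrite /yfun /normalize !rowsum_div; field.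
by rewrite t0 ri rj.
Qed.

Lemma term_le_row V k l : (forall i j, 0 <= V i j) -> V k l <= rowsum V k.
Proof. by move=> V0; rewrite /rowsum (bigD1 l) //= lerDl sumr_ge0. Qed.

Lemma row_le_sum2 V k : (forall i j, 0 <= V i j) ->
  rowsum V k <= \sum_(i : T) \sum_(j : T) V i j.
Proof.
move=> V0; rewrite /rowsum [X in _ <= X](bigD1 k) //= lerDl sumr_ge0 // => i _; exact: sumr_ge0.
Qed.

Lemma term_le_sum2 V k l : (forall i j, 0 <= V i j) ->
  V k l <= \sum_(i : T) \sum_(j : T) V i j.
Proof. by move=> V0; apply: le_trans (term_le_row V k l V0) (row_le_sum2 V k V0). Qed.

Lemma pedge_ge0 adj p i j : (forall W, 0 <= p W) -> 0 <= pedge adj p i j.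
Proof. by move=> p0; rewrite /pedge; case: (adj i j) => //; rewrite sumr_ge0. Qed.

Lemma pedge_le1 adj p i j : (forall W, 0 <= p W) -> \sum_(W : {set T}) p W = 1 ->
  pedge adj p i j <= 1.
Proof.
move=> p0 p1; rewrite /pedge; case: (adj i j) => //.
rewrite -p1 big_mkcond /=; apply: ler_sum => W _; by case: ifP.
Qed.

End Aux.

Lemma key (R : realFieldType) (c v v' tt tt' a b a' b' S eps : R) :
  0 < eps -> 0 <= c -> c <= S -> 0 <= S -> 0 < tt -> eps * tt <= v ->
  v <= a -> v <= b -> v <= v' -> tt <= tt' -> 0 < a' -> a' <= a + S ->
  0 < b' -> b' <= b + S -> 4 * S ^+ 2 / eps ^+ 3 <= tt ->
  c * v * tt / (a * b) - eps / 2 <= c * v' * tt' / (a' * b').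
Proof.
move=> e0 c0 cS S0 t0 et va vb vv' Htt a'0 a'S b'0 b'S Ct.
have v0 : 0 < v by apply: lt_le_trans et; rewrite mulr_gt0.
have a0 : 0 < a by apply: lt_le_trans va.
have b0 : 0 < b by apply: lt_le_trans vb.
have aS : 0 < a + S by lra.
have bS : 0 < b + S by lra.
have step1 : c * v * tt / ((a + S) * (b + S)) <= c * v' * tt' / (a' * b').
  apply: ler_pM.
  - by rewrite !mulr_ge0 // ltW.
  - by rewrite invr_ge0 mulr_ge0 // ltW.
  - by apply: ler_pM; [rewrite mulr_ge0 // ltW| exact: ltW | apply: ler_pM => //; exact: ltW|].
  - rewrite lef_pV2 ?posrE ?mulr_gt0 //.
    by apply: ler_pM => //; exact: ltW.
apply: le_trans step1.
set P := a * b; set Q := (a + S) * (b + S).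
have P0 : 0 < P by rewrite mulr_gt0.
have Q0 : 0 < Q by rewrite mulr_gt0.
have E : c * v * tt / P - c * v * tt / Q = c * v * tt * (Q - P) / (P * Q).
  by field; rewrite !gt_eqF.
suff : c * v * tt / P - c * v * tt / Q <= eps / 2 by lra.
rewrite E ler_pdivrMr ?mulr_gt0 //.
have QP : Q - P = S * (a + b + S) by rewrite /Q /P; ring.
have i2 : c * v * tt * (Q - P) <= S * v * tt * (S * (a + b + S)).
  rewrite QP; apply: ler_pM; last by [].
  - by rewrite !mulr_ge0 // ltW.
  - by rewrite mulr_ge0 // !addr_ge0 // ltW.
  - by rewrite -!mulrA ler_pM // mulr_ge0 // ltW.
have i3 : eps * (S * v * tt * (S * (a + b + S))) <= S ^+ 2 * v ^+ 2 * (a + b + S).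
  have h : eps * tt * v * (S ^+ 2 * (a + b + S)) <= v * v * (S ^+ 2 * (a + b + S)).
    apply: ler_pM => //. by rewrite !mulr_ge0 // ltW. by rewrite !mulr_ge0 // !addr_ge0 // ltW.
    by rewrite ler_pM // ?mulr_ge0 // ltW.
  have e1 : eps * (S * v * tt * (S * (a + b + S))) = eps * tt * v * (S ^+ 2 * (a + b + S)) by ring.
  have e2 : S ^+ 2 * v ^+ 2 * (a + b + S) = v * v * (S ^+ 2 * (a + b + S)) by ring.
  by rewrite e1 e2.
have i4 : v ^+ 2 <= P by rewrite expr2 /P ler_pM // ltW.
have i5 : v * (a + b + S) <= 2 * Q.
  have j1 : v * a <= b * a by rewrite ler_pM2r.
  have j2 : v * b <= a * b by rewrite ler_pM2r.
  have j3 : v * S <= a * S by rewrite ler_wpM2r.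
  have j4 : 0 <= a * S by rewrite mulr_ge0 // ltW.
  have j5 : 0 <= b * S by rewrite mulr_ge0 // ltW.
  have j6 : 0 <= S * S by rewrite mulr_ge0.
  have -> : v * (a + b + S) = v * a + v * b + v * S by ring.
  have -> : 2 * Q = 2 * (a * b) + 2 * (a * S) + 2 * (b * S) + 2 * (S * S) by rewrite /Q; ring.
  have : b * a = a * b by rewrite mulrC.
  lra.
have i6 : 4 * S ^+ 2 <= eps ^+ 2 * v.
  have e3 : 0 < eps ^+ 3 by rewrite exprn_gt0.
  have h : 4 * S ^+ 2 <= eps ^+ 3 * tt.
    by move: Ct; rewrite ler_pdivrMr // [eps ^+ 3 * _]mulrC.
  apply: le_trans h _.
  have -> : eps ^+ 3 * tt = eps ^+ 2 * (eps * tt) by ring.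
  by rewrite ler_wpM2l // exprn_ge0 // ltW.
have i7 : S ^+ 2 * v ^+ 2 * (a + b + S) <= S ^+ 2 * P * (a + b + S).
  have hs : 0 <= a + b + S by rewrite !addr_ge0 // ltW.
  apply: ler_wpM2r => //; apply: ler_wpM2l => //; exact: exprn_ge0.
have i8 : S ^+ 2 * (a + b + S) <= eps ^+ 2 / 2 * Q.
  have hs : 0 <= a + b + S by rewrite !addr_ge0 // ltW.
  have h1 : 4 * (S ^+ 2 * (a + b + S)) <= eps ^+ 2 * v * (a + b + S).
    by rewrite mulrA; apply: ler_wpM2r.
  have h2 : eps ^+ 2 * v * (a + b + S) <= eps ^+ 2 * (2 * Q).
    by rewrite -mulrA ler_wpM2l // exprn_ge0 // ltW.
  have e2 : 0 < eps ^+ 2 by rewrite exprn_gt0.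
  set X := S ^+ 2 * (a + b + S) in h1 *; set Y := eps ^+ 2 * v * (a + b + S) in h1 h2 *.
  have -> : eps ^+ 2 / 2 * Q = eps ^+ 2 * (2 * Q) / 4 by field.
  rewrite ler_pdivlMr //; lra.
have i9 : S ^+ 2 * P * (a + b + S) <= P * (eps ^+ 2 / 2 * Q).
  have -> : S ^+ 2 * P * (a + b + S) = P * (S ^+ 2 * (a + b + S)) by ring.
  by rewrite ler_wpM2l // ltW.
have : eps * (c * v * tt * (Q - P)) <= eps * (eps / 2 * (P * Q)).
  apply: le_trans (ler_wpM2l (ltW e0) i2) _.
  apply: le_trans i3 _; apply: le_trans i7 _; apply: le_trans i9 _.
  suff -> : eps * (eps / 2 * (P * Q)) = P * (eps ^+ 2 / 2 * Q) by [].
  by field.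
by rewrite ler_pM2l.
Qed.

Theorem lemma7 (R : realFieldType) (T : finType) (adj : rel T)
  (adj_sym : symmetric adj) (adj_irr : irreflexive adj)
  (a : T -> T -> R)
  (a_sym : forall i j, a i j = a j i)
  (a_ge0 : forall i j, 0 <= a i j)
  (a_adj : forall i j, 0 < a i j -> adj i j) :
  forall eps : R, 0 < eps ->
  exists C : R, 0 < C /\
  forall (p : {ffun {set T} -> R}) (v0 : T -> T -> R),
    (forall W, 0 <= p W) ->
    \sum_(W : {set T}) p W = 1 ->
    (exists i j, 0 < a i j * pedge adj p i j) ->
    (forall i j, v0 i j = v0 j i) ->
    (forall i j, 0 <= v0 i j) ->
    (forall i j, 0 < v0 i j <-> adj i j) ->
  forall (V : nat -> T -> T -> R), is_path adj a p v0 V ->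
  forall (i j : T) (n : nat), adj i j ->
    C <= total_mass (V n) ->
    Uset adj a p v0 i j eps (normalize (V n)) ->
    `| Hfun adj a p (normalize (V n.+1)) - Hfun adj a p (normalize (V n)) | < eps / 2 ->
    Uset adj a p v0 i j (2 * eps) (normalize (V n.+1)).
Proof.
move=> eps e0.
pose S := \sum_(k : T) \sum_(l : T) a k l.
have S0 : 0 <= S by rewrite sumr_ge0 // => k _; rewrite sumr_ge0.
have aS : forall k l, a k l <= S := fun k l => term_le_sum2 a k l a_ge0.
have C1 : 0 <= S / eps by rewrite divr_ge0 // ltW.
have C2 : 0 <= 4 * S ^+ 2 / eps ^+ 3 by rewrite divr_ge0 ?mulr_ge0 ?exprn_ge0 // ltW.
exists (1 + S / eps + 4 * S ^+ 2 / eps ^+ 3).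
set X := S / eps in C1 *; set Y := 4 * S ^+ 2 / eps ^+ 3 in C2 *.
have eX : X = S / eps by []. have eY : Y = 4 * S ^+ 2 / eps ^+ 3 by [].
clearbody X Y.
split; first lra.
move=> p v0 p0 p1 _ _ _ _ V [_ Hst] i j n aij Ct [Hd Hc] HH.
pose t := total_mass (V n).
have t0 : 0 < t by rewrite /t; lra.
have St : S <= eps * t by rewrite mulrC -ler_pdivrMr // -eX /t; lra.
have Ct2 : 4 * S ^+ 2 / eps ^+ 3 <= t by rewrite -eY /t; lra.
case: Hd => xsym xge0 xadj _ xact.
have Ve : forall k l, V n k l = normalize (V n) k l * t.
  by move=> k l; rewrite /normalize divfK // gt_eqF.
have Vsym k l : V n k l = V n l k by rewrite !Ve xsym.
have Vge0 k l : 0 <= V n k l by rewrite Ve mulr_ge0 // ltW.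
have Vadj k l : ~~ adj k l -> V n k l = 0 by move=> h; rewrite Ve xadj // mul0r.
case: (Hst n) => W [pW [c [_ HV]]].
pose D k l := if [&& adj k l, k \in W, l \in W, c k == l & c l == k] then a k l else 0.
have HV' k l : V n.+1 k l = V n k l + D k l by rewrite HV.
have Dge0 k l : 0 <= D k l by rewrite /D; case: ifP.
have Dle k l : D k l <= a k l by rewrite /D; case: ifP.
have Dsym k l : D k l = D l k.
  rewrite /D adj_sym a_sym.
  by case: (adj l k); case: (k \in W); case: (l \in W); case: (c k == l); case: (c l == k).
have Dadj k l : ~~ adj k l -> D k l = 0 by rewrite /D => /negbTE ->.
have Dact k l : D k l != 0 -> 0 < a k l * pedge adj p k l.
  rewrite /D; case: ifP => [/and5P [hadj hk hl _ _] ha|]; last by rewrite eqxx.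
  rewrite mulr_gt0 //; first by rewrite lt_def ha a_ge0.
  rewrite /pedge hadj (bigD1 W) /=; last by rewrite hk hl.
  by apply: lt_le_trans pW _; rewrite lerDl sumr_ge0.
pose d := total_mass D.
have d0 : 0 <= d by rewrite sumr_ge0 // => k _; rewrite sumr_ge0.
have t1 : total_mass (V n.+1) = t + d.
  rewrite /t /d /total_mass -big_split; apply: eq_bigr => k _.
  rewrite -big_split; apply: eq_bigr => l _ /=; exact: HV'.
have t'0 : 0 < total_mass (V n.+1) by rewrite t1; lra.
have V'ge0 k l : 0 <= V n.+1 k l by rewrite HV' addr_ge0.
have row1 k : rowsum (V n.+1) k = rowsum (V n) k + rowsum D k.
  by rewrite /rowsum -big_split; apply: eq_bigr => l _; exact: HV'.
have rowD k : rowsum D k <= S.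
  apply: le_trans (row_le_sum2 a k a_ge0).
  by apply: ler_sum => l _; exact: Dle.
have Delta' : inDelta adj a p v0 (normalize (V n.+1)).
  split.
  - by move=> k l; rewrite /normalize !HV' Vsym Dsym.
  - by move=> k l; rewrite /normalize divr_ge0 // ltW.
  - by move=> k l h; rewrite /normalize HV' Vadj // Dadj // addr0 mul0r.
  - by rewrite total_mass_norm divff // gt_eqF.
  have A1 : active_mass adj a p (V n.+1) = active_mass adj a p (V n) + d.
    rewrite /active_mass /d /total_mass -big_split; apply: eq_bigr => k _.
    rewrite -big_split; apply: eq_bigr => l _ /=.
    rewrite HV'; case: ifP => h //; rewrite add0r.
    case: (boolP (D k l == 0)) => [/eqP -> // | /Dact]; by rewrite h.
  have Ale : active_mass adj a p (V n) <= t.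
    apply: ler_sum => k _; apply: ler_sum => l _; by case: ifP.
  rewrite active_norm in xact; rewrite active_norm A1 t1.
  apply: le_trans xact _.
  set A := active_mass adj a p (V n).
  have td : 0 < t + d by lra.
  rewrite ler_pdivlMr //.
  have -> : A / t * (t + d) = A + A / t * d by field; rewrite gt_eqF.
  rewrite lerD2l ler_piMl //; by rewrite ler_pdivrMr // mul1r.
split => //.
have HH' : Hfun adj a p (normalize (V n.+1)) - Hfun adj a p (normalize (V n)) < eps / 2.
  exact: le_lt_trans (ler_norm _) HH.
have xle : normalize (V n.+1) i j <= normalize (V n) i j + S / t.
  rewrite /normalize -/t t1 HV' -mulrDl.
  apply: ler_pM.
  - by rewrite addr_ge0.
  - by rewrite invr_ge0 addr_ge0 // ltW.
  - by rewrite lerD2l (le_trans (Dle i j) (aS i j)).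
  - have td : 0 < t + d by lra.
    by rewrite lef_pV2 ?posrE // lerDl.
have Stle : S / t <= eps by rewrite ler_pdivrMr // mulrC.
case: (ltP (normalize (V n) i j) eps) => [xlt | xge].
  by left; lra.
case: Hc => [xlt|hy]; first by exfalso; lra.
right.
have v0' : eps * t <= V n i j.
  by move: xge; rewrite /normalize -/t ler_pdivlMr.
have vpos : 0 < V n i j by apply: lt_le_trans v0'; rewrite mulr_gt0.
have ra : V n i j <= rowsum (V n) i := term_le_row (V n) i j Vge0.
have rb : V n i j <= rowsum (V n) j by rewrite Vsym; exact: term_le_row.
have ra' : V n.+1 i j <= rowsum (V n.+1) i := term_le_row (V n.+1) i j V'ge0.
have rb' : V n.+1 i j <= rowsum (V n.+1) j by rewrite HV' Vsym Dsym -HV'; exact: term_le_row.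
have vv' : V n i j <= V n.+1 i j by rewrite HV' lerDl.
have c0 : 0 <= a i j * pedge adj p i j by rewrite mulr_ge0 // pedge_ge0.
have cS : a i j * pedge adj p i j <= S.
  apply: le_trans (aS i j); rewrite ler_piMr //; exact: pedge_le1.
have tt' : t <= total_mass (V n.+1) by rewrite t1 lerDl.
have a'0 : 0 < rowsum (V n.+1) i by apply: lt_le_trans ra'; lra.
have b'0 : 0 < rowsum (V n.+1) j by apply: lt_le_trans rb'; lra.
have a'S : rowsum (V n.+1) i <= rowsum (V n) i + S by rewrite row1 lerD2l.
have b'S : rowsum (V n.+1) j <= rowsum (V n) j + S by rewrite row1 lerD2l.
have Ky := @key R _ _ _ _ _ _ _ _ _ _ _ e0 c0 cS S0 t0 v0' ra rb vv' tt' a'0 a'S b'0 b'S Ct2.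
rewrite (yfun_norm _ _ _ _ _ _ (lt0r_neq0 t0)) in hy; last 2 first.
  - by rewrite gt_eqF //; lra.
  - by rewrite gt_eqF //; lra.
rewrite yfun_norm; last 3 first.
  - by rewrite gt_eqF.
  - by rewrite gt_eqF.
  - by rewrite gt_eqF.
move: Ky hy HH'; rewrite /t.
set u := _ / (_ * _); set w := _ / (_ * _).
move=> Ky hy HH'; lra.
Qed.
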